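(* For every $\beta > 0$ there exists a constant $C_0 > 0$ such that the following holds. Let $\mathcal{G}$ be a graph on $n$ vertices with maximum degree at most $d$. If $e(\mathcal{G}) \geqslant 4\beta d n$, then for every $C \geqslant C_0$, $$I(\mathcal{G},m) \leqslant \Big( n^{-Cd} + e^{-\beta m}\Big)\binom{n}{m}$$ for every $m \geqslant C\sqrt{n\log n}$.
   Context: $e(\mathcal{G})$ is the number of edges of $\mathcal{G}$ and $I(\mathcal{G},m)$ is the number of independent sets of size $m$ in $\mathcal{G}$. $\log$ is the natural logarithm. *)

(* Defs.v *)
From mathcomp Require Import all_boot.
From Stdlib Require Import Reals.
Set Implicit Arguments. Unset Strict Implicit. Unset Printing Implicit Defensive.

Definition simple_graph (T : finType) (e : rel T) : Prop :=
  symmetric e /\ irreflexive e.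

Definition deg (T : finType) (e : rel T) (x : T) : nat := #|[set y | e x y]|.

Definition nedges (T : finType) (e : rel T) : nat :=
  #|[set A : {set T} | [exists x, exists y, e x y && (A == [set x; y])]]|.

Definition independent (T : finType) (e : rel T) (A : {set T}) : bool :=
  [forall x in A, forall y in A, ~~ e x y].

Definition nindep (T : finType) (e : rel T) (m : nat) : nat :=
  #|[set A : {set T} | independent e A && (#|A| == m)]|.

(* Main.v *)
Require Import Defs.
From mathcomp Require Import all_boot.
From Stdlib Require Import Reals.
From Stdlib Require Import Lra.
From mathcomp Require Import zify.


Section Comb.
Variables (T : finType) (e : rel T).
Hypothesis esym : symmetric e.
Hypothesis eirr : irreflexive e.
Variable d : nat.
Hypothesis hdeg : forall x : T, (deg e x <= d)%N.

Lemma count_uniq_card (P : pred T) (l : seq T) :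
  uniq l -> count P l = #|[set w | (w \in l) && P w]|.
Proof.
move=> ul; rewrite -size_filter.
have uf : uniq (filter P l) by rewrite filter_uniq.
rewrite -(card_uniqP uf); apply: eq_card => w.
by rewrite inE mem_filter andbC.
Qed.

Lemma count_le_deg (v : T) (l : seq T) : uniq l -> (count (e v) l <= d)%N.
Proof.
move=> ul; rewrite count_uniq_card //; apply: leq_trans (hdeg v).
by apply: subset_leq_card; apply/subsetP => w; rewrite !inE => /andP[].
Qed.

Lemma count_le_deg' (w : T) (l : seq T) : uniq l -> (count (fun i => e i w) l <= d)%N.
Proof.
move=> ul; rewrite (eq_count (a2 := e w)) ?count_le_deg // => i; exact: esym.
Qed.

Fixpoint Ecnt (l : seq T) : nat :=
  if l is v :: l' then (count (e v) l' + Ecnt l')%N else 0%N.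

Definition Eset (l : seq T) : {set {set T}} :=
  [set A | [exists x, exists y, [&& x \in l, y \in l, e x y & A == [set x; y]]]].

Lemma cardU_le (A B : {set {set T}}) : (#|A :|: B| <= #|A| + #|B|)%N.
Proof. by rewrite cardsU leq_subr. Qed.

Lemma Eset_le l : uniq l -> (#|Eset l| <= Ecnt l)%N.
Proof.
elim: l => [|v l IH] /=.
  move=> _; rewrite leqn0 cards_eq0; apply/eqP/setP => A; rewrite !inE.
  by apply/negbTE/negP => /existsP[x /existsP[y]].
case/andP => vl ul.
have sub : Eset (v :: l) \subset
   Eset l :|: [set [set v; w] | w in [set w | (w \in l) && e v w]].
  apply/subsetP => A; rewrite !inE => /existsP[x /existsP[y /and4P[xl yl exy /eqP ->]]].
  move: xl yl exy; rewrite !inE.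
  case: (eqVneq x v) => [->|xv] /=.
    case: (eqVneq y v) => [->|yv] /=; first by rewrite eirr.
    move=> _ yl exy; apply/orP; right; apply/imsetP; exists y => //.
    by rewrite inE yl.
  move=> xl; case: (eqVneq y v) => [->|yv] /=.
    move=> _ exy; apply/orP; right; apply/imsetP; exists x.
      by rewrite inE xl /= esym.
    by rewrite setUC.
  move=> yl exy; apply/orP; left; apply/existsP; exists x; apply/existsP; exists y.
  by rewrite xl yl exy eqxx.
apply: leq_trans (subset_leq_card sub) _.
apply: leq_trans (cardU_le _ _) _.
rewrite addnC; apply: leq_add; last exact: IH.
apply: leq_trans (leq_imset_card _ _) _.
by rewrite count_uniq_card.
Qed.

Lemma nedges_le : (nedges e <= Ecnt (enum T))%N.
Proof.
have ue : uniq (enum T) by apply: enum_uniq.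
apply: (@leq_trans #|Eset (enum T)|); last exact: Eset_le.
apply: subset_leq_card; apply/subsetP => A; rewrite !inE.
move=> /existsP[x /existsP[y /andP[exy /eqP ->]]].
by apply/existsP; exists x; apply/existsP; exists y; rewrite !mem_enum exy eqxx.
Qed.
End Comb.


Lemma INR_addn m n : INR (m + n)%N = (INR m + INR n)%R.
Proof. by rewrite -plus_INR. Qed.
Lemma INR_muln m n : INR (m * n)%N = (INR m * INR n)%R.
Proof. by rewrite -mult_INR. Qed.

Lemma count_split (T : Type) (a b : pred T) (l : seq T) :
  count a l = (count (fun x => a x && b x) l + count (fun x => a x && ~~ b x) l)%N.
Proof. elim: l => //= x l ->; case: (a x); case: (b x) => /=; lia. Qed.

Lemma count_le2 (T : Type) (a b c : pred T) (l : seq T) :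
  (forall x, a x -> b x || c x) -> (count a l <= count b l + count c l)%N.
Proof.
move=> h; elim: l => //= x l IH.
case ax: (a x); last by lia.
by move: (h x ax); case: (b x); case: (c x) => //=; lia.
Qed.

Section Ocnt.
Variables (T : finType) (e : rel T).
Hypothesis esym : symmetric e.
Variable d : nat.
Hypothesis hdeg : forall x : T, (deg e x <= d)%N.

Fixpoint Ocnt (l : seq T) (f : pred T) : nat :=
  if l is v :: l' then (count (fun w => f w && e v w) l' + Ocnt l' f)%N else 0%N.

Fixpoint Sfun (h : pred T) (l L : seq T) : nat :=
  if l is w :: l' then ((if h w then count (fun i => e i w) L else 0) + Sfun h l' L)%N
  else 0%N.

Lemma Sfun_cons h l u L :
  Sfun h l (u :: L) = (count (fun w => h w && e u w) l + Sfun h l L)%N.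
Proof. elim: l => //= w l ->; case: (h w) => /=; lia. Qed.

Lemma Sfun_le h l L : uniq L -> (Sfun h l L <= d * count h l)%N.
Proof.
move=> uL; elim: l => //= w l IH.
case: (h w) => /=; last by [].
have := @count_le_deg' T e esym d hdeg w L uL; lia.
Qed.

Lemma Ocnt_U l f g :
  (Ocnt l (fun w => f w || g w) <= Ocnt l f + Sfun (fun w => g w && ~~ f w) l l)%N.
Proof.
elim: l => //= u l IH.
rewrite Sfun_cons.
have h1 := @count_le2 _ (fun w => (f w || g w) && e u w) (fun w => f w && e u w)
   (fun w => (g w && ~~ f w) && e u w) l.
have : (count (fun w => (f w || g w) && e u w) l <=
   count (fun w => f w && e u w) l + count (fun w => (g w && ~~ f w) && e u w) l)%N.
  by apply: h1 => x; case: (f x); case: (g x); case: (e u x).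
lia.
Qed.

Lemma Ocnt_U_le l f g : uniq l ->
  (Ocnt l (fun w => f w || g w) <= Ocnt l f + d * count (fun w => g w && ~~ f w) l)%N.
Proof.
move=> ul; apply: leq_trans (Ocnt_U l f g) _.
by rewrite leq_add2l; apply: Sfun_le.
Qed.

Lemma Ocnt_pred0 l : Ocnt l pred0 = 0%N.
Proof. by elim: l => //= u l ->; rewrite addn0 count_pred0. Qed.
End Ocnt.


Section Wsec.
Variables (T : finType) (e : rel T).
Hypothesis esym : symmetric e.
Hypothesis eirr : irreflexive e.
Variable d : nat.
Hypothesis hdeg : forall x : T, (deg e x <= d)%N.
Variable p : R.
Hypothesis hp0 : (0 < p)%R.
Hypothesis hp1 : (p < 1)%R.
Variable Rt : R.

Local Open Scope R_scope.

Fixpoint W (l : seq T) (f : pred T) : R :=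
  match l with
  | [::] => 1
  | v :: l' => (1 - p) * W l' f + (if f v then 0 else p * W l' (fun w => f w || e v w))
  end.

Definition gam := p ^ 2 / (1 + p * INR d).

Lemma gam_ge0 : 0 <= gam.
Proof.
unfold gam; apply: Rmult_le_pos; first by apply: pow_le; lra.
apply: Rlt_le; apply: Rinv_0_lt_compat; have := pos_INR d; nra.
Qed.

Lemma bern (k : nat) : (1 - p) ^ k * (1 + p * INR k) <= 1.
Proof.
elim: k => [|k IH]; first (simpl; lra).
rewrite S_INR /=.
have h0 : 0 <= (1 - p) ^ k by apply: pow_le; lra.
have hk := pos_INR k.
have : 0 <= (1 - p) ^ k * (p * p * (INR k + 1)).
  apply: Rmult_le_pos => //; nra.
nra.
Qed.

Lemma step_ineq (k : nat) : (k <= d)%nat ->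
  ((1 - p) + p * (1 - p) ^ k) * exp (gam * INR k) <= 1.
Proof.
move=> kd.
have hkd : INR k <= INR d by apply: le_INR; apply/leP.
have hk := pos_INR k.
have hb := bern k.
have h0 : 0 <= (1 - p) ^ k by apply: pow_le; lra.
have hden : 0 < 1 + p * INR k by nra.
have hden' : 0 < 1 + p * INR d by nra.
have hq : (1 - p) ^ k <= / (1 + p * INR k).
  apply: (Rmult_le_reg_r (1 + p * INR k)) => //.
  by rewrite Rinv_l; lra.
have hg : gam * INR k <= p * (p * INR k) / (1 + p * INR k).
  unfold gam; rewrite /Rdiv.
  have -> : p ^ 2 * / (1 + p * INR d) * INR k = p * (p * INR k) * / (1 + p * INR d) by simpl; ring.
  apply: Rmult_le_compat_l; first by nra.
  apply: Rinv_le_contravar => //; nra.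
have hexp : exp (gam * INR k) * exp (- (gam * INR k)) = 1.
  by rewrite -exp_plus Rplus_opp_r exp_0.
have hlin := exp_ineq1_le (- (gam * INR k)).
have hpos := exp_pos (gam * INR k).
have hA : (1 - p) + p * (1 - p) ^ k <= 1 - gam * INR k.
  have : p * (1 - p) ^ k <= p * / (1 + p * INR k) by apply: Rmult_le_compat_l; lra.
  have : p * / (1 + p * INR k) = p - p * (p * INR k) / (1 + p * INR k).
    field; lra.
  lra.
have hA0 : 0 <= (1 - p) + p * (1 - p) ^ k by nra.
apply: Rle_trans (Rmult_le_compat_r _ _ _ (Rlt_le _ _ hpos) hA) _.
nra.
Qed.

Lemma W_ge0 l f : 0 <= W l f.
Proof.
elim: l f => [|v l IH] f /=; first lra.
have := IH f; have := IH (fun w => f w || e v w).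
case: (f v); nra.
Qed.

Definition lq := ln (1 - p).

Lemma lq_exp : exp lq = 1 - p.
Proof. by rewrite /lq exp_ln; lra. Qed.

Lemma lq_le0 : lq <= 0.
Proof.
rewrite /lq -ln_1; apply: Rlt_le; apply: ln_increasing; lra.
Qed.

Definition Bq (l : seq T) (f : pred T) (phi : nat) : R :=
  INR (Ecnt T e l) - INR (Ocnt T e l f) - 2 * INR d * Rt + 2 * INR d * INR phi
  + INR d * INR (count f l).

Lemma exp_mono x y : x <= y -> exp x <= exp y.
Proof.
move=> h; case: (Rle_lt_or_eq_dec _ _ h) => [h'|->]; last lra.
by apply: Rlt_le; apply: exp_increasing.
Qed.

Lemma exp_ge1 x : 0 <= x -> 1 <= exp x.
Proof. move=> h; have := exp_ineq1_le x; lra. Qed.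

Lemma W_upper l : uniq l -> forall (f : pred T) (phi : nat),
  W l f <= exp (lq * (Rt - INR phi)) + (1 - p) ^ count f l * exp (- (gam * Bq l f phi)).
Proof.
have hg := gam_ge0.
have hd := pos_INR d.
elim: l => [|v l IH] /=.
  move=> _ f phi; rewrite /Bq /=.
  have e1 := exp_pos (lq * (Rt - INR phi)).
  have e2 := exp_pos (- (gam * (0 - 0 - 2 * INR d * Rt + 2 * INR d * INR phi + INR d * 0))).
  case: (Rle_lt_dec Rt (INR phi)) => h.
    have : 1 <= exp (lq * (Rt - INR phi)).
      by apply: exp_ge1; have := lq_le0; nra.
    lra.
  have : 1 <= exp (- (gam * (0 - 0 - 2 * INR d * Rt + 2 * INR d * INR phi + INR d * 0))).
    apply: exp_ge1; have h3 : 0 <= gam * (INR d * (Rt - INR phi)) by apply: Rmult_le_pos => //; apply: Rmult_le_pos => //; lra.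
    nra.
  lra.
case/andP => vl ul f phi.
have IH' := IH ul.
have hcd : (count (e v) l <= d)%nat by apply: (@count_le_deg T e d hdeg v l ul).
have hcdR : INR (count (e v) l) <= INR d by apply: le_INR; apply/leP.
set X := exp (lq * (Rt - INR phi)).
have hq0 : 0 <= 1 - p by lra.
case fv: (f v) => /=.
-
  have h1 := IH' f phi.+1.
  rewrite Rplus_0_r.
  have hX : (1 - p) * exp (lq * (Rt - INR phi.+1)) = X.
    by rewrite -{1}lq_exp -exp_plus S_INR /X; congr exp; ring.
  have hB : Bq (v :: l) f phi <= Bq l f phi.+1.
    rewrite /Bq; have -> : count f (v :: l) = (count f l).+1 by rewrite /= fv.
    rewrite !S_INR [Ecnt _ _ (v :: l)]/= [Ocnt _ _ (v :: l) f]/= !INR_addn; have := pos_INR (count (fun w => f w && e v w) l).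
    lra.
  have hE : exp (- (gam * Bq l f phi.+1)) <= exp (- (gam * Bq (v :: l) f phi)).
    by apply: exp_mono; nra.
  have hp : 0 <= (1 - p) ^ count f l by apply: pow_le.
  have := exp_pos (- (gam * Bq l f phi.+1)).
  rewrite ?add0n ?add1n /=.
  move=> _; apply: Rle_trans (Rmult_le_compat_l _ _ _ hq0 h1) _.
  rewrite Rmult_plus_distr_l hX; apply: Rplus_le_compat_l.
  rewrite Rmult_assoc; apply: Rmult_le_compat_l => //; apply: Rmult_le_compat_l => //.
-
  set f' := (fun w => f w || e v w).
  set k := count (fun w => e v w && ~~ f w) l.
  have hkd : (k <= d)%nat.
    apply: leq_trans _ hcd; apply: sub_count => w /=; by case/andP.
  have hcf' : count f' l = (count f l + k)%nat.
    rewrite (count_split _ f' f) /k; congr addn; apply: eq_count => w; rewrite /f';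
      by case: (f w); case: (e v w).
  have hce : count (e v) l = (k + count (fun w => f w && e v w) l)%nat.
    rewrite (count_split _ (e v) (fun w => ~~ f w)) /k; congr addn;
      apply: eq_count => w; by case: (f w); case: (e v w).
  have hO : (Ocnt T e l f' <= Ocnt T e l f + d * k)%nat.
    exact: (@Ocnt_U_le T e esym d hdeg l f (e v) ul).
  have hOR : INR (Ocnt T e l f') <= INR (Ocnt T e l f) + INR d * INR k.
    rewrite -INR_muln -INR_addn; apply: le_INR; apply/leP; exact: hO.
  have hB1 : Bq l f phi = Bq (v :: l) f phi - INR k.
    rewrite /Bq /= fv /= !INR_addn hce !INR_addn; ring.
  have hB2 : Bq (v :: l) f phi - INR k <= Bq l f' phi.
    rewrite /Bq /= fv /= !INR_addn hce hcf' !INR_addn; change (INR 0) with 0; nra.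
  have h1 := IH' f phi.
  have h2 := IH' f' phi.
  rewrite hcf' pow_add in h2.
  rewrite add0n.
  set B := Bq (v :: l) f phi.
  set Z := exp (gam * INR k).
  set Q := (1 - p) ^ count f l.
  set Y := exp (- (gam * B)).
  have hZ1 : exp (- (gam * Bq l f phi)) = Y * Z.
    rewrite hB1 /Y /Z /B -exp_plus; f_equal; ring.
  have hZ2 : exp (- (gam * Bq l f' phi)) <= Y * Z.
    rewrite /Y /Z -exp_plus; apply: exp_mono; have := Rmult_le_compat_l _ _ _ hg hB2; rewrite /B Rmult_minus_distr_l; lra.
  have hst := @step_ineq k hkd.
  have hQ : 0 <= Q by apply: pow_le.
  have hYp : 0 < Y by apply: exp_pos.
  have hZp : 0 < Z by apply: exp_pos.
  have hqk : 0 <= (1 - p) ^ k by apply: pow_le.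
  rewrite hZ1 in h1.
  have h2' : W l f' <= X + Q * (1 - p) ^ k * (Y * Z).
    apply: Rle_trans h2 _; apply: Rplus_le_compat_l.
    apply: Rmult_le_compat_l => //; first (apply: Rmult_le_pos => //).
  have hfin : (1 - p) * (X + Q * (Y * Z)) + p * (X + Q * (1 - p) ^ k * (Y * Z))
     = X + Q * Y * (((1 - p) + p * (1 - p) ^ k) * Z) by ring.
  have hQY : 0 <= Q * Y by nra.
  have : Q * Y * (((1 - p) + p * (1 - p) ^ k) * Z) <= Q * Y * 1.
    by apply: Rmult_le_compat_l.
  move=> hlast.
  apply: Rle_trans (Rplus_le_compat _ _ _ _ (Rmult_le_compat_l _ _ _ hq0 h1) (Rmult_le_compat_l _ _ _ (Rlt_le _ _ hp0) h2')) _.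
  rewrite hfin; lra.
Qed.
End Wsec.


Section Nsec.
Variables (T : finType) (e : rel T).
Hypothesis esym : symmetric e.
Hypothesis eirr : irreflexive e.

Definition goodset (l : seq T) (f : pred T) (k : nat) : {set {set T}} :=
  [set A : {set T} | [&& [forall a in A, (a \in l) && ~~ f a], independent e A & #|A| == k]].

Definition Ncnt l f k := #|goodset l f k|.

Lemma Ncnt_big l f k : (size l < k)%N -> Ncnt l f k = 0%N.
Proof.
move=> hk; apply/eqP; rewrite cards_eq0; apply/eqP/setP => A; rewrite !inE.
apply/negbTE; apply/negP => /and3P[/forallP hA _ /eqP hAk].
have : (#|A| <= size l)%N.
  apply: leq_trans (card_size l); apply: subset_leq_card; apply/subsetP => a aA.
  by have := hA a; rewrite aA /= => /andP[].
lia.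
Qed.

Lemma Ncnt_nil f : (Ncnt [::] f 0 <= 1)%N.
Proof.
rewrite -(cards1 (set0 : {set T})); apply: subset_leq_card; apply/subsetP => A.
rewrite !inE => /and3P[_ _ /eqP /cards0_eq ->]; by rewrite eqxx.
Qed.

Lemma N_rec v l f k : v \notin l ->
  (Ncnt (v :: l) f k <= Ncnt l f k +
     (if k is k'.+1 then (if f v then 0 else Ncnt l (fun w => f w || e v w) k') else 0))%N.
Proof.
move=> vl; rewrite /Ncnt -(cardsID [set A : {set T} | v \in A]) addnC.
apply: leq_add.
  apply: subset_leq_card; apply/subsetP => A; rewrite !inE => /andP[vA /and3P[/forallP hA ind hk]].
  apply/and3P; split => //; apply/forallP => a; apply/implyP => aA.
  have := hA a; rewrite aA /= inE => /andP[/orP[/eqP av|al] ->]; last by rewrite al.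
  by move: vA; rewrite -av aA.
case: k => [|k].
  rewrite leqn0 cards_eq0; apply/eqP/setP => A; rewrite !inE.
  apply/negbTE/negP => /andP[/and3P[_ _ /eqP /cards0_eq ->]]; by rewrite inE.
case fv: (f v).
  rewrite leqn0 cards_eq0; apply/eqP/setP => A; rewrite !inE.
  apply/negbTE/negP => /andP[/and3P[/forallP hA _ _] vA].
  by have := hA v; rewrite vA fv andbF.
set S := (_ :&: _).
have inj : {in S &, injective (fun A : {set T} => A :\ v)}.
  move=> A B; rewrite !inE => /andP[_ vA] /andP[_ vB] h.
  by rewrite -(setD1K vA) -(setD1K vB) h.
rewrite -(card_in_imset inj); apply: subset_leq_card; apply/subsetP => B.
case/imsetP => A; rewrite !inE => /andP[/and3P[/forallP hA /forallP ind /eqP hAk] vA] ->.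
apply/and3P; split.
- apply/forallP => a; apply/implyP; rewrite !inE => /andP[av aA].
  have := hA a; rewrite aA /= inE (negbTE av) /= => /andP[al nfa].
  rewrite al /= negb_or nfa /=.
  have := ind v; rewrite vA /= => /forallP /(_ a); by rewrite aA.
- apply/forallP => x; apply/implyP; rewrite inE => /andP[_ xA].
  apply/forallP => y; apply/implyP; rewrite inE => /andP[_ yA].
  by have := ind x; rewrite xA /= => /forallP /(_ y); rewrite yA.
- by move: hAk; rewrite (cardsD1 v A) vA add1n => -[->].
Qed.

Lemma nindep_le_N m : (nindep e m <= Ncnt (enum T) pred0 m)%N.
Proof.
apply: subset_leq_card; apply/subsetP => A; rewrite !inE => /andP[ind hk].
apply/and3P; split => //; apply/forallP => a; apply/implyP => _; by rewrite mem_enum.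
Qed.

Variable p : R.
Hypothesis hp0 : (0 < p)%R.
Hypothesis hp1 : (p < 1)%R.

Local Open Scope R_scope.

Lemma W_lower l : uniq l -> forall (f : pred T) (k j : nat), (k + j = size l)%nat ->
  p ^ k * (1 - p) ^ j * INR (Ncnt l f k) <= W T e p l f.
Proof.
elim: l => [|v l IH] /=.
  move=> _ f k j hkj; have [-> ->] : k = 0%nat /\ j = 0%nat by lia.
  have := Ncnt_nil f; move/leP/le_INR => /=; lra.
case/andP => vl ul f k j hkj.
have hq : 0 <= 1 - p by lra.
have hNr := @N_rec v l f k vl.
have hNR := le_INR _ _ (elimT leP hNr).
rewrite INR_addn in hNR.
have Wf'0 := @W_ge0 T e p hp0 hp1 l (fun w => f w || e v w).
have hpk : forall n, 0 <= p ^ n by move=> n; apply: pow_le; lra.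
have hqj : forall n, 0 <= (1 - p) ^ n by move=> n; apply: pow_le.
have T1 : p ^ k * (1 - p) ^ j * INR (Ncnt l f k) <= (1 - p) * W T e p l f.
  case: j hkj => [|j] hkj.
    rewrite Ncnt_big /=; last by lia.
    have := @W_ge0 T e p hp0 hp1 l f; rewrite Rmult_0_r => h; by apply: Rmult_le_pos.
  have hkj2 : (k + j)%nat = size l by move: hkj; rewrite addnS => -[].
  have := IH ul f k j hkj2.
  have -> : p ^ k * (1 - p) ^ j.+1 * INR (Ncnt l f k) =
            (1 - p) * (p ^ k * (1 - p) ^ j * INR (Ncnt l f k)) by simpl; ring.
  move=> h; apply: Rmult_le_compat_l => //.
have hpos : forall kk, 0 <= INR (Ncnt (v :: l) f kk) by move=> kk; apply: pos_INR.
clear hNr; case: k hkj hNR T1 => [|k] hkj hNR T1.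
  rewrite Rplus_0_r in hNR.
  have : p ^ 0 * (1 - p) ^ j * INR (Ncnt (v :: l) f 0) <= p ^ 0 * (1 - p) ^ j * INR (Ncnt l f 0).
    apply: Rmult_le_compat_l => //; apply: Rmult_le_pos; [apply: hpk|apply: hqj].
  have := Rmult_le_pos _ _ (Rlt_le _ _ hp0) Wf'0; move=> h0 h; rewrite /= in h T1 *; case: (f v) => /=; lra.
case fv: (f v) hNR => hNR.
  rewrite Rplus_0_r in hNR.
  have : p ^ k.+1 * (1 - p) ^ j * INR (Ncnt (v :: l) f k.+1) <= p ^ k.+1 * (1 - p) ^ j * INR (Ncnt l f k.+1).
    apply: Rmult_le_compat_l => //; apply: Rmult_le_pos; [apply: hpk|apply: hqj].
  move=> h; apply: Rle_trans h _; rewrite Rplus_0_r; exact: T1.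
have T2 : p ^ k.+1 * (1 - p) ^ j * INR (Ncnt l (fun w => f w || e v w) k) <=
          p * W T e p l (fun w => f w || e v w).
  have := IH ul (fun w => f w || e v w) k j (ltac:(by move: hkj; rewrite addSn => -[])).
  have -> : p ^ k.+1 * (1 - p) ^ j * INR (Ncnt l (fun w => f w || e v w) k) =
      p * (p ^ k * (1 - p) ^ j * INR (Ncnt l (fun w => f w || e v w) k)) by simpl; ring.
  move=> h; apply: Rmult_le_compat_l => //; lra.
have : p ^ k.+1 * (1 - p) ^ j * INR (Ncnt (v :: l) f k.+1) <=
  p ^ k.+1 * (1 - p) ^ j * (INR (Ncnt l f k.+1) + INR (Ncnt l (fun w => f w || e v w) k)).
  apply: Rmult_le_compat_l => //; apply: Rmult_le_pos; [apply: hpk|apply: hqj].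
set a := p ^ k.+1 * (1 - p) ^ j in T1 T2 *.
rewrite Rmult_plus_distr_l; move=> h; apply: Rle_trans h _; exact: Rplus_le_compat.
Qed.
End Nsec.

Section Esec.

Lemma fact_eq n : Factorial.fact n = n`!.
Proof. elim: n => [|n IH] //; by rewrite fact_simpl factS IH. Qed.

Lemma INR_subn n k : (k <= n)%N -> INR (n - k)%N = (INR n - INR k)%R.
Proof. move=> h; rewrite -minus_INR //; exact/leP. Qed.

Local Open Scope R_scope.

Lemma C_eq n i : (i <= n)%nat -> Binomial.C n i = INR 'C(n, i).
Proof.
move=> hi; rewrite /Binomial.C !fact_eq.
have h := bin_fact hi.
have hf1 : 0 < INR (i`!) by apply: lt_0_INR; apply/ltP; exact: fact_gt0.
have hf2 : 0 < INR ((n - i)%coq_nat)`! by apply: lt_0_INR; apply/ltP; exact: fact_gt0.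
have -> : INR (n`!) = INR 'C(n, i) * (INR (i`!) * INR ((n - i)%coq_nat)`!).
  by rewrite -h !INR_muln.
field; lra.
Qed.

Section Mode.
Variables n m : nat.
Hypothesis hm0 : (0 < m)%nat.
Hypothesis hmn : (m < n)%nat.

Definition pp := INR m / INR n.
Definition tt k := INR 'C(n, k) * pp ^ k * (1 - pp) ^ (n - k).

Lemma hnpos : 0 < INR n.
Proof. apply: lt_0_INR; apply/ltP; lia. Qed.

Lemma pp_n : pp * INR n = INR m.
Proof. rewrite /pp; field; have := hnpos; lra. Qed.

Lemma pp_lt1 : 0 < pp < 1.
Proof.
have hn := hnpos.
have hmR : 0 < INR m by apply: lt_0_INR; apply/ltP; lia.
have hmnR : INR m < INR n by apply: lt_INR; apply/ltP; lia.
rewrite /pp; split.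
  apply: Rdiv_lt_0_compat => //.
apply: (Rmult_lt_reg_r (INR n)) => //; rewrite /Rdiv Rmult_assoc Rinv_l; lra.
Qed.

Lemma tt_ge0 k : 0 <= tt k.
Proof.
have [h1 h2] := pp_lt1.
rewrite /tt; apply: Rmult_le_pos; [apply: Rmult_le_pos|apply: pow_le; lra].
  exact: pos_INR.
apply: pow_le; lra.
Qed.

Lemma tt_ratio k : (k < n)%nat ->
  INR k.+1 * (INR n - INR m) * tt k.+1 = (INR n - INR k) * INR m * tt k.
Proof.
move=> hk.
have hb := mul_bin_left n k.
have hbR : INR k.+1 * INR 'C(n, k.+1) = (INR n - INR k) * INR 'C(n, k).
  by rewrite -INR_muln hb INR_muln INR_subn //; lia.
rewrite /tt.
have -> : (n - k = (n - k.+1).+1)%nat by lia.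
set q := (1 - pp) ^ (n - k.+1).
have hq : (1 - pp) * INR n = INR n - INR m by have := pp_n; lra.
rewrite /= -/q.
have E1 : INR k.+1 * (INR n - INR m) * (INR 'C(n, k.+1) * (pp * pp ^ k) * q)
   = (INR k.+1 * INR 'C(n, k.+1)) * (INR n - INR m) * pp * pp ^ k * q by ring.
rewrite E1 hbR -hq.
have -> : INR m = pp * INR n by rewrite pp_n.
ring.
Qed.

Lemma tt_up k : (k.+1 <= m)%nat -> tt k <= tt k.+1.
Proof.
move=> hk.
have hkn : (k < n)%nat by lia.
have hr := @tt_ratio k hkn.
have hK : INR k.+1 <= INR m by apply: le_INR; apply/leP.
have hM : INR m < INR n by apply: lt_INR; apply/ltP.
rewrite S_INR in hK hr.
have hK0 := pos_INR k.
have ht := tt_ge0 k.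
have hc : 0 < (INR k + 1) * (INR n - INR m) by nra.
apply: (Rmult_le_reg_l _ _ _ hc).
rewrite hr.
have : (INR k + 1) * (INR n - INR m) <= (INR n - INR k) * INR m by nra.
move=> h; apply: Rmult_le_compat_r => //.
Qed.

Lemma tt_down k : (m <= k)%nat -> (k < n)%nat -> tt k.+1 <= tt k.
Proof.
move=> hk hkn.
have hr := @tt_ratio k hkn.
have hK : INR m <= INR k by apply: le_INR; apply/leP.
have hKn : INR k < INR n by apply: lt_INR; apply/ltP.
have hM : INR m < INR n by apply: lt_INR; apply/ltP.
rewrite S_INR in hr.
have hK0 := pos_INR k.
have hM0 := pos_INR m.
have ht := tt_ge0 k.
have hc : 0 < (INR k + 1) * (INR n - INR m) by nra.
apply: (Rmult_le_reg_l _ _ _ hc).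
rewrite hr.
have : (INR n - INR k) * INR m <= (INR k + 1) * (INR n - INR m) by nra.
move=> h; apply: Rmult_le_compat_r => //.
Qed.

Lemma tt_max k : (k <= n)%nat -> tt k <= tt m.
Proof.
move=> hk.
case: (leqP k m) => hkm.
  have : forall i, (i <= m)%nat -> tt (m - i) <= tt m.
    elim=> [|i IH] hi; first by rewrite subn0; lra.
    apply: Rle_trans (IH (ltnW hi)).
    have -> : (m - i = (m - i.+1).+1)%nat by lia.
    apply: tt_up; lia.
  move/(_ (m - k)%nat (leq_subr _ _)); by rewrite subKn.
have : forall i, (m + i <= n)%nat -> tt (m + i) <= tt m.
  elim=> [|i IH] hi; first by rewrite addn0; lra.
  have hi2 : (m + i <= n)%nat by lia.
  apply: Rle_trans (IH hi2).
  rewrite addnS; apply: tt_down; lia.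
move/(_ (k - m)%nat); rewrite subnKC; last by lia.
by apply.
Qed.

Lemma mode_bound : 1 <= INR n.+1 * tt m.
Proof.
have [h1 h2] := pp_lt1.
have hb := Binomial.binomial pp (1 - pp) n.
have e1 : pp + (1 - pp) = 1 by ring.
rewrite e1 pow1 in hb; rewrite hb.
have -> : sum_f_R0 (fun i => Binomial.C n i * pp ^ i * (1 - pp) ^ (n - i)%coq_nat) n
  = sum_f_R0 tt n.
  apply: sum_eq => i /leP hi; rewrite /tt C_eq //.
rewrite Rmult_comm -sum_cte.
apply: sum_Rle => i /leP hi; exact: tt_max.
Qed.
End Mode.

End Esec.

Section Gsec.
Local Open Scope R_scope.

Lemma exp_mono' x y : x <= y -> exp x <= exp y.
Proof.
move=> h; case: (Rle_lt_or_eq_dec _ _ h) => [h'|->]; last lra.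
by apply: Rlt_le; apply: exp_increasing.
Qed.

Lemma ln_mono x y : 0 < x -> x <= y -> ln x <= ln y.
Proof.
move=> hx h; case: (Rle_lt_or_eq_dec _ _ h) => [h'|->]; last lra.
by apply: Rlt_le; apply: ln_increasing.
Qed.

Lemma mul_exp_le A x y : 0 < A -> ln A <= x - y -> A * exp (- x) <= exp (- y).
Proof.
move=> hA h; rewrite -{1}(exp_ln A hA) -exp_plus; apply: exp_mono'; lra.
Qed.

Lemma ln_cube N : 0 < N -> ln (N * N * N) = 3 * ln N.
Proof. move=> h; rewrite !ln_mult //; try nra. Qed.

Lemma analytic (beta C N M D E : R) :
  0 < beta -> 12 <= beta * C -> 2 <= C -> 2 <= N -> 1 <= D -> 1 <= M -> M < N ->
  C * sqrt (N * ln N) <= M -> 4 * beta * D * N <= E ->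
  let p := M / N in
  let Rt := 5 * beta * N / 4 in
  let gam := p ^ 2 / (1 + p * D) in
  (N + 1) * (exp (ln (1 - p) * Rt) + exp (- (gam * (E - 2 * D * Rt))))
  <= exp (- (C * D) * ln N) + exp (- (beta * M)).
Proof.
move=> hb hbC hC hN hD hM hMN hsq hE p Rt gam.
set L := ln N.
have hL : 0 < L by rewrite /L -ln_1; apply: ln_increasing; lra.
have hLN : L <= N - 1.
  rewrite /L; have := exp_ineq1_le (N - 1).
  move=> h; rewrite -(ln_exp (N - 1)); apply: ln_mono; lra.
have hNL : 0 <= N * L by nra.
set s := sqrt (N * L) in hsq.
have hs0 : 0 <= s := sqrt_pos _.
have hss : s * s = N * L by apply: sqrt_sqrt.
have hsL : L <= s.
  rewrite /s -{1}(sqrt_square L); last lra.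
  apply: sqrt_le_1_alt; nra.
have hM2 : C * C * (N * L) <= M * M.
  rewrite -hss; have : 0 <= C * s by nra. nra.
have hbM : 12 * L <= beta * M.
  have : beta * (C * s) <= beta * M by apply: Rmult_le_compat_l; lra.
  nra.
have hN3 : 2 * (N + 1) <= exp (beta * M / 4).
  have : exp (3 * L) <= exp (beta * M / 4) by apply: exp_mono'; lra.
  have : exp (3 * L) = N * N * N by rewrite -ln_cube ?exp_ln; nra.
  nra.
have hp : 0 < p < 1.
  rewrite /p; split; first by apply: Rdiv_lt_0_compat; lra.
  apply: (Rmult_lt_reg_r N); first lra.
  rewrite /Rdiv Rmult_assoc Rinv_l; lra.
have hpN : p * N = M by rewrite /p; field; lra.
have hlq : ln (1 - p) <= - p.
  rewrite -(ln_exp (- p)); apply: ln_mono; first lra.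
  have := exp_ineq1_le (- p); lra.
have T1 : (N + 1) * exp (ln (1 - p) * Rt) <= / 2 * exp (- (beta * M)).
  have hRt : 0 <= Rt by rewrite /Rt; nra.
  have : exp (ln (1 - p) * Rt) <= exp (- (5 * beta * M / 4)).
    apply: exp_mono'.
    have : ln (1 - p) * Rt <= - p * Rt by apply: Rmult_le_compat_r.
    have : p * Rt = 5 * beta * M / 4 by rewrite /Rt -hpN; field.
    lra.
  have h2 : 2 * (N + 1) * exp (- (5 * beta * M / 4)) <= exp (- (beta * M)).
    apply: mul_exp_le; first lra.
    have : ln (2 * (N + 1)) <= beta * M / 4.
      rewrite -(ln_exp (beta * M / 4)); apply: ln_mono => //; lra.
    lra.
  have := exp_pos (- (5 * beta * M / 4)).
  nra.
have hg0 : 0 <= gam.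
  rewrite /gam; apply: Rmult_le_pos; first by apply: pow_le; lra.
  apply: Rlt_le; apply: Rinv_0_lt_compat; nra.
have hE2 : 3 / 2 * beta * D * N <= E - 2 * D * Rt by rewrite /Rt; lra.
have hX : exp (- (gam * (E - 2 * D * Rt))) <= exp (- (gam * (3 / 2 * beta * D * N))).
  apply: exp_mono'; have := Rmult_le_compat_l _ _ _ hg0 hE2; lra.
have hpD : 0 < p * D by nra.
have hden : 0 < 1 + p * D by lra.
case: (Rle_lt_dec 8 (p * D)) => hcase.
- have hg : 8 * p / (9 * D) <= gam.
    have eq1 : gam - 8 * p / (9 * D) = p * (p * D - 8) / (9 * D * (1 + p * D)).
      rewrite /gam; simpl; field; lra.
    have : 0 <= p * (p * D - 8) / (9 * D * (1 + p * D)).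
      apply: Rmult_le_pos; first nra.
      apply: Rlt_le; apply: Rinv_0_lt_compat; nra.
    lra.
  have hY : 4 / 3 * beta * M <= gam * (3 / 2 * beta * D * N).
    have : 8 * p / (9 * D) * (3 / 2 * beta * D * N) = 4 / 3 * beta * M.
      rewrite -hpN; field; lra.
    have hbD0 : 0 <= beta * D by nra.
    have hpos : 0 <= 3 / 2 * beta * D * N by nra.
    have := Rmult_le_compat_r _ _ _ hpos hg; lra.
  have h2 : 2 * (N + 1) * exp (- (4 / 3 * beta * M)) <= exp (- (beta * M)).
    apply: mul_exp_le; first lra.
    have : ln (2 * (N + 1)) <= beta * M / 4.
      rewrite -(ln_exp (beta * M / 4)); apply: ln_mono => //; lra.
    nra.
  have : exp (- (gam * (3 / 2 * beta * D * N))) <= exp (- (4 / 3 * beta * M)).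
    apply: exp_mono'; lra.
  have := exp_pos (- (gam * (E - 2 * D * Rt))).
  have := exp_pos (- (C * D) * L).
  have := exp_pos (- (4 / 3 * beta * M)).
  nra.
- have hg : p ^ 2 / 9 <= gam.
    rewrite /gam /Rdiv; apply: Rmult_le_compat_l; first by apply: pow_le; lra.
    apply: Rinv_le_contravar => //; lra.
  have hY : beta * D * C * C * L / 6 <= gam * (3 / 2 * beta * D * N).
    have hbD0 : 0 <= beta * D by nra.
    have hpos : 0 <= 3 / 2 * beta * D * N by nra.
    have := Rmult_le_compat_r _ _ _ hpos hg.
    have : p ^ 2 / 9 * (3 / 2 * beta * D * N) = beta * D * (M * M) / (6 * N).
      rewrite -hpN; simpl; field; lra.
    have : beta * D * C * C * L / 6 <= beta * D * (M * M) / (6 * N).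
      apply: (Rmult_le_reg_r (6 * N)); first lra.
      have -> : beta * D * (M * M) / (6 * N) * (6 * N) = beta * D * (M * M) by field; lra.
      have -> : beta * D * C * C * L / 6 * (6 * N) = beta * D * (C * C * (N * L)) by field.
      have hbd : 0 <= beta * D by nra.
      by apply: Rmult_le_compat_l.
    lra.
  have hln1 : ln (N + 1) <= 2 * L.
    have h : ln (N + 1) <= ln (N * N) by apply: ln_mono; nra.
    rewrite ln_mult in h; rewrite /L; lra.
  have hCC : C * D * L + 2 * L <= beta * D * C * C * L / 6.
    have : 2 * C <= beta * C * C / 6 by nra.
    have : 2 * C <= beta * C * C / 6.
      have := Rmult_le_compat_r C _ _ (ltac:(lra)) hbC; nra.
    have hDL : 0 <= D * L by nra.
    move=> h1 _; have := Rmult_le_compat_r _ _ _ hDL h1.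
    have : 2 * L <= 2 * D * L by nra.
    nra.
  have h2 : (N + 1) * exp (- (gam * (3 / 2 * beta * D * N))) <= exp (- (C * D) * L).
    rewrite Ropp_mult_distr_l_reverse.
    apply: mul_exp_le; first lra.
    lra.
  have := exp_pos (- (gam * (3 / 2 * beta * D * N))).
  have := exp_pos (- (beta * M)).
  nra.
Qed.

End Gsec.


Lemma nindep_le_C (T : finType) (e : rel T) m : (nindep e m <= 'C(#|T|, m))%N.
Proof.
rewrite /nindep -card_draws; apply: subset_leq_card; apply/subsetP => A.
by rewrite !inE => /andP[_ ->].
Qed.

Lemma nindep_full (T : finType) (e : rel T) x y : e x y -> nindep e #|T| = 0%N.
Proof.
move=> exy; apply/eqP; rewrite cards_eq0; apply/eqP/setP => A; rewrite !inE.
apply/negbTE/negP => /andP[ind /eqP hA].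
have AT : A = setT by apply/eqP; rewrite eqEcard subsetT cardsT hA leqnn.
move: ind; rewrite AT => /forallP /(_ x) /implyP /(_ (in_setT x)) /forallP /(_ y).
by rewrite in_setT exy.
Qed.

Lemma ln_INR_le1 n : (n <= 1)%N -> ln (INR n) = 0%R.
Proof.
case: n => [|[|//]] _.
  rewrite /ln; case: (Rlt_dec 0 (INR 0)) => [h|h] //; exfalso; exact: (Rlt_irrefl 0 h).
by rewrite /= ln_1.
Qed.

Theorem lemma5p5 :
  forall beta : R, (0 < beta)%R ->
  exists C0 : R, (0 < C0)%R /\
  forall (T : finType) (e : rel T), simple_graph e ->
  forall d : nat, (forall x : T, deg e x <= d)%N ->
  (INR (nedges e) >= 4 * beta * INR d * INR #|T|)%R ->
  forall C : R, (C >= C0)%R ->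
  forall m : nat, (INR m >= C * sqrt (INR #|T| * ln (INR #|T|)))%R ->
  (INR (nindep e m) <=
     (Rpower (INR #|T|) (- (C * INR d)) + exp (- (beta * INR m))) * INR 'C(#|T|, m))%R.
Proof.
move=> beta hb.
have hb12 : (0 < 12 / beta)%R by apply: Rdiv_lt_0_compat; lra.
exists (12 / beta + 2)%R; split; first lra.
move=> T e [esym eirr] d hdeg hE C hC m hm.
have hCb : (12 <= beta * C)%R.
  have e12 : (beta * (12 / beta) = 12)%R by field; lra.
  have : (beta * (12 / beta + 2) <= beta * C)%R by apply: Rmult_le_compat_l; lra.
  lra.
have hC2 : (2 <= C)%R by lra.
have hnC := @nindep_le_C T e m.
have hnCR : (INR (nindep e m) <= INR 'C(#|T|, m))%R by apply: le_INR; apply/leP.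
have hCpos := pos_INR 'C(#|T|, m).
have hexpb := exp_pos (- (beta * INR m)).
have triv : (1 <= Rpower (INR #|T|) (- (C * INR d)))%R ->
  (INR (nindep e m) <=
     (Rpower (INR #|T|) (- (C * INR d)) + exp (- (beta * INR m))) * INR 'C(#|T|, m))%R.
  move=> h1; have : (1 * INR 'C(#|T|, m) <=
     (Rpower (INR #|T|) (- (C * INR d)) + exp (- (beta * INR m))) * INR 'C(#|T|, m))%R.
    apply: Rmult_le_compat_r => //; lra.
  lra.
case: (leqP d 0) => hd0.
  apply: triv; have -> : d = 0%N by lia.
  rewrite /Rpower /= Rmult_0_r Ropp_0 Rmult_0_l exp_0; lra.
case: (leqP #|T| 1) => hn1.
  apply: triv; rewrite /Rpower ln_INR_le1 // Rmult_0_r exp_0; lra.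
set n := #|T| in hE hm hnC hnCR hCpos triv hn1 *.
have hnR : (2 <= INR n)%R by apply: (le_INR 2); apply/leP.
have hdR : (1 <= INR d)%R by apply: (le_INR 1); apply/leP.
have hL : (0 < ln (INR n))%R by rewrite -ln_1; apply: ln_increasing; lra.
have hm0 : (0 < INR m)%R.
  have : (0 < sqrt (INR n * ln (INR n)))%R by apply: sqrt_lt_R0; nra.
  nra.
have hm1 : (0 < m)%N by apply/ltP; apply: INR_lt; simpl; lra.
have hRHS0 : (0 <= Rpower (INR n) (- (C * INR d)) + exp (- (beta * INR m)))%R.
  have := exp_pos (- (C * INR d) * ln (INR n)); rewrite /Rpower; lra.
case: (ltngtP m n) => hmn; last first.
-
  have : (0 < nedges e)%N.
    apply/ltP; apply: INR_lt; simpl.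
    have hbd : (0 < beta * INR d)%R by nra.
    have : (0 < 4 * beta * INR d * INR n)%R by nra.
    lra.
  rewrite /nedges card_gt0 => /set0Pn [A]; rewrite inE => /existsP [x /existsP [y /andP [exy _]]].
  rewrite hmn /n (@nindep_full T e x y exy) /=.
  apply: Rmult_le_pos; last exact: pos_INR.
  rewrite /Rpower; apply: Rplus_le_le_0_compat; apply: Rlt_le; apply: exp_pos.
-
  rewrite bin_small // in hnCR *; rewrite /= in hnCR *; lra.
have [hp0 hp1] := @pp_lt1 n m hm1 hmn.
set p := pp n m in hp0 hp1.
have ue : uniq (enum T) by apply: enum_uniq.
have hsize : (m + (n - m))%N = size (enum T).
  rewrite -cardE -/n subnKC //; exact: ltnW.
have hlow := @W_lower T e p hp0 hp1 _ ue pred0 m (n - m) hsize.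
set Rt := (5 * beta * INR n / 4)%R.
have hup := @W_upper T e esym d hdeg p hp0 hp1 Rt _ ue pred0 0.
rewrite count_pred0 /= Rmult_1_l /Bq Ocnt_pred0 /= count_pred0 in hup.
set E := INR (Ecnt T e (enum T)) in hup.
have hEe : (4 * beta * INR d * INR n <= E)%R.
  have : (INR (nedges e) <= E)%R by apply: le_INR; apply/leP; apply: nedges_le.
  lra.
have han := @analytic beta C (INR n) (INR m) (INR d) E hb hCb hC2 hnR hdR (ltac:(apply: (le_INR 1); apply/leP; exact: hm1))
   (ltac:(apply: lt_INR; apply/ltP; exact: hmn)) (ltac:(lra)) hEe.
simpl in han.
have hmode := @mode_bound n m hm1 hmn.
rewrite S_INR in hmode.
rewrite /tt -/p in hmode.
have hN := nindep_le_N T e m.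
have hNR : (INR (nindep e m) <= INR (Ncnt T e (enum T) pred0 m))%R by apply: le_INR; apply/leP.
have hpq : (0 <= p ^ m * (1 - p) ^ (n - m))%R.
  apply: Rmult_le_pos; apply: pow_le; lra.
set P := (exp (ln (1 - p) * Rt) + exp (- (p ^ 2 / (1 + p * INR d) * (E - 2 * INR d * Rt))))%R in han.
have hWP : (W T e p (enum T) pred0 <= P)%R.
  apply: Rle_trans hup _; rewrite /P /lq /gam.
  have -> : (Rt - 0 = Rt)%R by ring.
  have -> : (E - 0 - 2 * INR d * Rt + 2 * INR d * 0 + INR d * INR 0 = E - 2 * INR d * Rt)%R by simpl; ring.
  lra.
have h1 : (INR (nindep e m) * (p ^ m * (1 - p) ^ (n - m)) <= P)%R.
  apply: Rle_trans hWP; apply: Rle_trans hlow.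
  rewrite Rmult_comm; apply: Rmult_le_compat_l => //.
set Cn := INR 'C(n, m) in hmode hCpos *.
set Q := (p ^ m * (1 - p) ^ (n - m))%R in hpq h1.
have hmode' : (1 <= (INR n + 1) * Cn * Q)%R by rewrite /Q; move: hmode; rewrite !Rmult_assoc.
have hNn := pos_INR (nindep e m).
have hP0 : (0 <= P)%R by rewrite /P; have := exp_pos (ln (1 - p) * Rt); have := exp_pos (- (p ^ 2 / (1 + p * INR d) * (E - 2 * INR d * Rt))); lra.
have s1 : (INR (nindep e m) <= INR (nindep e m) * ((INR n + 1) * Cn * Q))%R.
  have := Rmult_le_compat_l _ _ _ hNn hmode'; lra.
have s2 : (INR (nindep e m) * ((INR n + 1) * Cn * Q) <= (INR n + 1) * Cn * P)%R.
  have -> : (INR (nindep e m) * ((INR n + 1) * Cn * Q) = (INR n + 1) * Cn * (INR (nindep e m) * Q))%R by ring.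
  apply: Rmult_le_compat_l => //; nra.
have s3 : ((INR n + 1) * Cn * P <= (Rpower (INR n) (- (C * INR d)) + exp (- (beta * INR m))) * Cn)%R.
  have -> : ((INR n + 1) * Cn * P = ((INR n + 1) * P) * Cn)%R by ring.
  apply: Rmult_le_compat_r => //.
apply: Rle_trans s1 _; apply: Rle_trans s2 _; exact: s3.
Qed.
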